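(* Let $\rho:F_n\to SL(2,\mathbb{C})$ be an irreducible representation of the free group $F_n$. Then there exists a choice of free generators $\epsilon_1,\dots,\epsilon_n$ of $F_n$ such that the $n$-tuple $A=(\rho(\epsilon_1),\dots,\rho(\epsilon_n))$ satisfies $\sigma_{12}(A)\neq0$ and $\nu_1(A)\neq0$.
   Context: For $A=(A_1,\dots,A_n)\in SL(2,\mathbb{C})^{\times n}$: $\sigma_{12}(A)=\mathsf{tr}(A_1A_2A_1^{-1}A_2^{-1})-2$ and $\nu_1(A)=\frac{(\mathsf{tr}A_1)^2}{2}-2$. Irreducible means no proper nonzero subspace of $\mathbb{C}^2$ is invariant under $\rho(F_n)$. *)

(* Defs.v *)
From HB Require Import structures.
From mathcomp Require Import all_boot all_order all_algebra.
From mathcomp Require Import complex Rstruct.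
From Stdlib Require Import Reals.
Set Implicit Arguments. Unset Strict Implicit. Unset Printing Implicit Defensive.
Import Order.TTheory GRing.Theory Num.Theory.
Local Open Scope ring_scope.

Definition CC : numClosedFieldType := (Rdefinitions.R)[i].

(* A letter (i, false) is the generator x_i, (i, true) is x_i^{-1}. *)
Definition letter (n : nat) := ('I_n * bool)%type.
Definition inv_letter n (a : letter n) : letter n := (a.1, ~~ a.2).

Fixpoint reduced n (w : seq (letter n)) : bool :=
  match w with
  | a :: ((b :: _) as w') => (b != inv_letter a) && reduced w'
  | _ => true
  end.

Definition push n (a : letter n) (w : seq (letter n)) : seq (letter n) :=
  if w is b :: w' then (if b == inv_letter a then w' else a :: w) else [:: a].

Definition wmul n (u v : seq (letter n)) : seq (letter n) := foldr (@push n) v u.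
Definition winv n (u : seq (letter n)) : seq (letter n) := rev (map (@inv_letter n) u).

Definition letter_img n (e : 'I_n -> seq (letter n)) (a : letter n) :=
  if a.2 then winv (e a.1) else e a.1.
Definition subst_hom n (e : 'I_n -> seq (letter n)) (w : seq (letter n)) :=
  foldr (fun a acc => wmul (letter_img e a) acc) [::] w.

(* (e 1, ..., e n) is a free basis of F_n: each e i is an element of F_n
   and the endomorphism x_i |-> e i is an automorphism (bijective). *)
Definition free_basis n (e : 'I_n -> seq (letter n)) : Prop :=
  (forall i, reduced (e i)) /\
  (forall y, reduced y -> exists x, reduced x /\ subst_hom e x = y) /\
  (forall x y, reduced x -> reduced y -> subst_hom e x = subst_hom e y -> x = y).

(* rho : F_n -> SL(2,C) is a group homomorphism (values on non-reduced
   words are irrelevant). *)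
Definition SL2_rep n (rho : seq (letter n) -> 'M[CC]_2) : Prop :=
  (forall u, reduced u -> \det (rho u) = 1) /\
  (forall u v, reduced u -> reduced v -> rho (wmul u v) = rho u *m rho v).

(* Irreducible: no proper nonzero subspace of C^2 (column vectors) is
   invariant under rho(F_n).  A subspace V is the span of the rows of U
   (read as vectors); invariance of V under v |-> M v is (U M^T <= U). *)
Definition irreducible_rep n (rho : seq (letter n) -> 'M[CC]_2) : Prop :=
  ~ exists U : 'M[CC]_2,
      [/\ leq 1 (\rank U), leq (\rank U) 1 &
          forall g, reduced g -> (U *m (rho g)^T <= U)%MS].

Definition sigma12 (A1 A2 : 'M[CC]_2) : CC :=
  \tr (A1 *m A2 *m invmx A1 *m invmx A2) - 2.
Definition nu1 (A1 : 'M[CC]_2) : CC := (\tr A1) ^+ 2 / 2 - 2.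

(* Main.v *)
Require Import Defs.
From HB Require Import structures.
From mathcomp Require Import all_boot all_order all_algebra.
From mathcomp Require Import complex Rstruct.
From mathcomp Require Import ring.
From mathcomp Require Import perm fingroup.
Import GRing.Theory Num.Theory.
Set Implicit Arguments. Unset Strict Implicit. Unset Printing Implicit Defensive.
Local Open Scope ring_scope.


Lemma inv_letterK n (a : letter n) : inv_letter (inv_letter a) = a.
Proof. by case: a => i b; rewrite /inv_letter /= negbK. Qed.

Lemma inv_letter_neq n (a : letter n) : inv_letter a != a.
Proof. case: a => i b; rewrite /inv_letter /= xpair_eqE eqxx /=; by case: b. Qed.

Lemma reduced_cons n (a : letter n) w :
  reduced (a :: w) = (if w is b :: _ then b != inv_letter a else true) && reduced w.
Proof. by case: w. Qed.

Lemma reduced_tl n (a : letter n) w : reduced (a :: w) -> reduced w.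
Proof. by rewrite reduced_cons => /andP[]. Qed.

Lemma push_red n (a : letter n) w : reduced w -> reduced (push a w).
Proof.
case: w => [|b w] // Hw /=.
case: ifP => Hb; first exact: (reduced_tl Hw).
by rewrite reduced_cons Hb Hw.
Qed.

Lemma pushK n (a : letter n) w : reduced w -> push a (push (inv_letter a) w) = w.
Proof.
case: w => [|b w] Hw /=; first by rewrite eqxx.
case: ifP => Hb; last by rewrite /= eqxx.
move/eqP: Hb => Hb; subst b; rewrite inv_letterK in Hw *.
case: w Hw => [|c w] //= /andP[Hc _]; by rewrite (negbTE Hc).
Qed.

Lemma wmul_red n (u v : seq (letter n)) : reduced v -> reduced (wmul u v).
Proof. elim: u => [|a u IH] //= Hv; exact/push_red/IH. Qed.

Lemma wmul_cons n (a : letter n) u v : wmul (a :: u) v = push a (wmul u v).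
Proof. by []. Qed.

Lemma wmul_push n (a : letter n) x w : reduced w ->
  wmul (push a x) w = push a (wmul x w).
Proof.
move=> Hw; case: x => [|b x] //=.
case: ifP => Hb //; move/eqP: Hb => ->.
by rewrite pushK // wmul_red.
Qed.

Lemma wmulA n (u v w : seq (letter n)) : reduced w ->
  wmul (wmul u v) w = wmul u (wmul v w).
Proof. move=> Hw; elim: u => [|a u IH] //=; by rewrite wmul_push // IH. Qed.

Lemma wmul_cat n (u v : seq (letter n)) : reduced (u ++ v) -> wmul u v = u ++ v.
Proof.
elim: u => [|a u IH] //= Hr.
rewrite IH; last exact: (reduced_tl Hr).
move: Hr; case: (u ++ v) => [|b w] //= /andP[Hb _]; by rewrite (negbTE Hb).
Qed.

Lemma wmul1r n (u : seq (letter n)) : reduced u -> wmul u [::] = u.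
Proof. by move=> H; rewrite wmul_cat cats0. Qed.

Lemma winvK n (u : seq (letter n)) : winv (winv u) = u.
Proof.
by rewrite /winv map_rev revK -map_comp (eq_map (@inv_letterK n)) map_id.
Qed.

Lemma winv_cons n (a : letter n) u : winv (a :: u) = winv u ++ [:: inv_letter a].
Proof. by rewrite /winv /= rev_cons cats1. Qed.

Lemma reduced_cat n (u v : seq (letter n)) : reduced (u ++ v) -> reduced u /\ reduced v.
Proof.
elim: u => [|a u IH] //= H; split.
  case: u IH H => [|b u] //= IH /andP[-> H]; by case: (IH H).
by case: (IH (reduced_tl H)).
Qed.

Definition redrel n : rel (letter n) := fun a b => b != inv_letter a.

Lemma reduced_sorted n (w : seq (letter n)) : reduced w = sorted (@redrel n) w.
Proof.
elim: w => [|a w IH] //; rewrite reduced_cons IH.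
by case: w {IH} => [|b w] //=.
Qed.

Lemma winv_red n (u : seq (letter n)) : reduced u -> reduced (winv u).
Proof.
rewrite !reduced_sorted /winv rev_sorted sorted_map.
have E : relpre (@inv_letter n) (fun z => (@redrel n)^~ z) =2 @redrel n.
  move=> x y; rewrite /relpre /redrel /=.
  apply/idP/idP; apply: contra => /eqP E.
    by rewrite E inv_letterK.
  by rewrite inv_letterK in E; rewrite -E.
by case: u => [|a u] //=; rewrite (eq_path E).
Qed.

Lemma wmulV n (u : seq (letter n)) : reduced u -> wmul u (winv u) = [::].
Proof.
elim: u => [|a u IH] // Hu.
have Hu' := reduced_tl Hu.
rewrite winv_cons -(wmul_cat (u:= winv u)); last by rewrite -winv_cons winv_red.
rewrite wmul_cons -wmulA // IH //= eqxx //.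
Qed.

Lemma wmulVl n (u : seq (letter n)) : reduced u -> wmul (winv u) u = [::].
Proof. move=> Hu; rewrite -{2}(winvK u); apply: wmulV; exact: winv_red. Qed.

Lemma inv_unique n (y z : seq (letter n)) : reduced y -> reduced z ->
  wmul y z = [::] -> z = winv y.
Proof.
move=> Hy Hz E.
have -> : z = wmul (wmul (winv y) y) z by rewrite wmulVl.
by rewrite wmulA // E wmul1r // winv_red.
Qed.

Definition basis_ok n (e : 'I_n -> seq (letter n)) := forall i, reduced (e i).

Lemma img_red n (e : 'I_n -> seq (letter n)) a : basis_ok e -> reduced (letter_img e a).
Proof. move=> He; rewrite /letter_img; case: ifP => _ //; exact: winv_red. Qed.

Lemma subst_red n (e : 'I_n -> seq (letter n)) w : basis_ok e -> reduced (subst_hom e w).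
Proof. move=> He; elim: w => [|a w IH] //=; exact: wmul_red. Qed.

Lemma subst_cons n (e : 'I_n -> seq (letter n)) a w :
  subst_hom e (a :: w) = wmul (letter_img e a) (subst_hom e w).
Proof. by []. Qed.

Lemma img_inv n (e : 'I_n -> seq (letter n)) a :
  letter_img e (inv_letter a) = winv (letter_img e a).
Proof. case: a => i [] //=; by rewrite /letter_img /= winvK. Qed.

Lemma subst_push n (e : 'I_n -> seq (letter n)) a w : basis_ok e -> reduced w ->
  subst_hom e (push a w) = wmul (letter_img e a) (subst_hom e w).
Proof.
move=> He Hw; case: w Hw => [|b w] Hw //=.
case: ifP => Hb //; move/eqP: Hb => ->.
rewrite img_inv -wmulA ?wmulV ?img_red //; exact: subst_red.
Qed.

Lemma subst_mul n (e : 'I_n -> seq (letter n)) u v : basis_ok e -> reduced v ->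
  subst_hom e (wmul u v) = wmul (subst_hom e u) (subst_hom e v).
Proof.
move=> He Hv; elim: u => [|a u IH] //=.
rewrite subst_push // ?wmul_red // IH wmulA //; exact: subst_red.
Qed.

Lemma subst_winv n (e : 'I_n -> seq (letter n)) u : basis_ok e -> reduced u ->
  subst_hom e (winv u) = winv (subst_hom e u).
Proof.
move=> He Hu; apply: inv_unique; try exact: subst_red.
by rewrite -subst_mul ?wmulV // winv_red.
Qed.

Lemma eq_subst n (e f : 'I_n -> seq (letter n)) w : e =1 f -> subst_hom e w = subst_hom f w.
Proof.
move=> E; elim: w => [|a w IH] //=; by rewrite IH /letter_img E.
Qed.

Lemma subst_comp n (e f : 'I_n -> seq (letter n)) w : basis_ok e -> basis_ok f ->
  subst_hom e (subst_hom f w) = subst_hom (fun i => subst_hom e (f i)) w.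
Proof.
move=> He Hf; elim: w => [|a w IH] //=.
rewrite subst_mul ?subst_red // IH; congr wmul.
rewrite /letter_img; case: ifP => // _; exact: subst_winv.
Qed.

Lemma subst_id n (w : seq (letter n)) : reduced w ->
  subst_hom (fun i => [:: (i, false)]) w = w.
Proof.
elim: w => [|a w IH] // Hw; rewrite subst_cons IH; last exact: reduced_tl Hw.
have -> : letter_img (fun i => [:: (i, false)]) a = [:: a].
  by case: a {Hw} => i [].
by rewrite wmul_cat.
Qed.

Lemma subst1 n (e : 'I_n -> seq (letter n)) i : basis_ok e ->
  subst_hom e [:: (i, false)] = e i.
Proof. move=> He; rewrite subst_cons wmul1r //; exact: img_red. Qed.

Definition nbasis n (e : 'I_n -> seq (letter n)) :=
  basis_ok e /\ exists f, basis_ok f /\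
    (forall i, subst_hom e (f i) = [:: (i, false)]) /\
    (forall i, subst_hom f (e i) = [:: (i, false)]).

Lemma nbasis_free n (e : 'I_n -> seq (letter n)) : nbasis e -> free_basis e.
Proof.
move=> [He [f [Hf [Hef Hfe]]]]; split => //; split.
  move=> y Hy; exists (subst_hom f y); split; first exact: subst_red.
  by rewrite subst_comp // (eq_subst _ Hef) subst_id.
move=> x y Hx Hy E.
have: subst_hom f (subst_hom e x) = subst_hom f (subst_hom e y) by rewrite E.
by rewrite !subst_comp // !(eq_subst _ Hfe) !subst_id.
Qed.

Lemma nbasis_comp n (e g : 'I_n -> seq (letter n)) : nbasis e -> nbasis g ->
  nbasis (fun i => subst_hom e (g i)).
Proof.
move=> [He [f [Hf [Hef Hfe]]]] [Hg [h [Hh [Hgh Hhg]]]].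
have Heg : basis_ok (fun i => subst_hom e (g i)) by move=> i; exact: subst_red.
have Hhf : basis_ok (fun i => subst_hom h (f i)) by move=> i; exact: subst_red.
split => //; exists (fun i => subst_hom h (f i)); split => //.
split => i /=.
  rewrite subst_comp // (eq_subst (f := e)) ?Hef // => j.
  by rewrite -subst_comp // Hgh subst1.
rewrite subst_comp // (eq_subst (f := h)) ?Hhg // => j.
by rewrite -subst_comp // Hfe subst1.
Qed.


Lemma nbasis_perm n (s : {perm 'I_n}) : nbasis (fun i => [:: (s i, false)]).
Proof.
split => //; exists (fun i => [:: ((s^-1)%g i, false)]); split => //.
split => i; rewrite subst1 //; by rewrite ?permKV ?permK.
Qed.

Definition transv n (m l : 'I_n) (b : bool) : 'I_n -> seq (letter n) :=
  fun i => if i == m then [:: (m, false); (l, b)] else [:: (i, false)].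

Lemma transv_ok n (m l : 'I_n) b : m != l -> basis_ok (transv m l b).
Proof.
move=> Hml i; rewrite /transv; case: ifP => // _.
by rewrite /= /inv_letter /= xpair_eqE eq_sym (negbTE Hml).
Qed.

Lemma subst_transv_l n (m l : 'I_n) b c : m != l ->
  letter_img (transv m l b) (l, c) = [:: (l, c)].
Proof.
move=> Hml; rewrite /letter_img /transv /= eq_sym (negbTE Hml).
by case: c.
Qed.

Lemma transv_m n (m l : 'I_n) b : transv m l b m = [:: (m, false); (l, b)].
Proof. by rewrite /transv eqxx. Qed.

Lemma transv_neq n (m l : 'I_n) b i : i != m -> transv m l b i = [:: (i, false)].
Proof. by move=> H; rewrite /transv (negbTE H). Qed.

Lemma nbasis_transv n (m l : 'I_n) b : m != l -> nbasis (transv m l b).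
Proof.
move=> Hml; split; first exact: transv_ok.
exists (transv m l (~~ b)); split; first exact: transv_ok.
split => i; (case: (eqVneq i m) => [->|Him];
  last by rewrite (transv_neq _ _ Him) subst1; [exact: transv_neq | exact: transv_ok]);
  rewrite (transv_m m) subst_cons subst_cons subst_transv_l //
     /letter_img /= transv_m; by case: b; rewrite /wmul /= /inv_letter /= eqxx.
Qed.


Definition mk2 (a b c d : CC) : 'M[CC]_2 :=
  \matrix_(i < 2, j < 2) if i == 0 then (if j == 0 then a else b) else (if j == 0 then c else d).
Definition mkv (p q : CC) : 'cV[CC]_2 := \col_(i < 2) if i == 0 then p else q.

Lemma ord2P (i : 'I_2) : i = 0 \/ i = 1.
Proof. case: i => [[|[|k]] Hk]; [left|right|by []]; exact: val_inj. Qed.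

Lemma mk2E (M : 'M[CC]_2) : M = mk2 (M 0 0) (M 0 1) (M 1 0) (M 1 1).
Proof. apply/matrixP => i j; rewrite mxE; by case: (ord2P i) => ->; case: (ord2P j) => ->. Qed.

Lemma mkvE (v : 'cV[CC]_2) : v = mkv (v 0 0) (v 1 0).
Proof. apply/matrixP => i j; rewrite mxE; rewrite (ord1 j); by case: (ord2P i) => ->. Qed.

Lemma mul2 a b c d a' b' c' d' : mk2 a b c d *m mk2 a' b' c' d' =
  mk2 (a*a'+b*c') (a*b'+b*d') (c*a'+d*c') (c*b'+d*d').
Proof.
apply/matrixP => i j; rewrite !mxE !big_ord_recl big_ord0 !mxE /=.
by case: (ord2P i) => ->; case: (ord2P j) => -> /=; rewrite addr0.
Qed.

Lemma mul2v a b c d p q : mk2 a b c d *m mkv p q = mkv (a * p + b * q) (c * p + d * q).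
Proof.
apply/matrixP => i j; rewrite !mxE !big_ord_recl big_ord0 !mxE /=.
by case: (ord2P i) => -> /=; rewrite addr0.
Qed.

Lemma add2 a b c d a' b' c' d' : mk2 a b c d + mk2 a' b' c' d' =
  mk2 (a+a') (b+b') (c+c') (d+d').
Proof.
apply/matrixP => i j; rewrite !mxE.
by case: (ord2P i) => ->; case: (ord2P j) => -> /=.
Qed.

Lemma opp2 a b c d : - mk2 a b c d = mk2 (-a) (-b) (-c) (-d).
Proof.
apply/matrixP => i j; rewrite !mxE.
by case: (ord2P i) => ->; case: (ord2P j) => -> /=.
Qed.

Lemma scale2v (x p q : CC) : x *: mkv p q = mkv (x * p) (x * q).
Proof. apply/matrixP => i j; rewrite !mxE; by case: (ord2P i) => ->. Qed.

Lemma one2 : (1%:M : 'M[CC]_2) = mk2 1 0 0 1.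
Proof.
apply/matrixP => i j; rewrite !mxE.
by case: (ord2P i) => ->; case: (ord2P j) => -> /=.
Qed.

Lemma tr2 a b c d : \tr (mk2 a b c d) = a + d.
Proof. by rewrite /mxtrace !big_ord_recl big_ord0 !mxE /= addr0. Qed.

Lemma det2 a b c d : \det (mk2 a b c d) = a * d - b * c.
Proof.
rewrite (expand_det_row _ 0) !big_ord_recl big_ord0 /cofactor !mxE /=.
rewrite !det_mx11 !mxE /= /bump /=. rewrite expr0 expr1. ring.
Qed.

Lemma eq2 a b c d a' b' c' d' : mk2 a b c d = mk2 a' b' c' d' ->
  [/\ a = a', b = b', c = c' & d = d'].
Proof.
move=> E; have F i j : mk2 a b c d i j = mk2 a' b' c' d' i j by rewrite E.
by move: (F 0 0) (F 0 1) (F 1 0) (F 1 1); rewrite !mxE /=.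
Qed.

Lemma eqv p q p' q' : mkv p q = mkv p' q' -> p = p' /\ q = q'.
Proof.
move=> E; have F i : mkv p q i 0 = mkv p' q' i 0 by rewrite E.
by move: (F 0) (F 1); rewrite !mxE /=.
Qed.

Lemma mkv_eq0 p q : (mkv p q == 0) = (p == 0) && (q == 0).
Proof.
apply/eqP/andP => [E|[/eqP -> /eqP ->]].
  have F i : mkv p q i 0 = 0 by rewrite E mxE.
  by move: (F 0) (F 1); rewrite !mxE /= => -> ->.
by apply/matrixP => i j; rewrite !mxE; case: (ord2P i) => ->.
Qed.

Lemma inv2 a b c d : a * d - b * c = 1 -> invmx (mk2 a b c d) = mk2 d (-b) (-c) a.
Proof.
move=> H.
have U : mk2 a b c d \in unitmx by rewrite unitmxE det2 H unitr1.
have E : mk2 a b c d *m mk2 d (-b) (-c) a = 1%:M.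
  by rewrite mul2 one2 -H; congr mk2; ring.
by rewrite -[RHS](mulKmx U) E mulmx1.
Qed.

Lemma two_neq0 : (2 : CC) != 0.
Proof. by rewrite pnatr_eq0. Qed.

Definition Kc (X Y : 'M[CC]_2) := \det (X *m Y - Y *m X).
Definition cross (v w : 'cV[CC]_2) := v 0 0 * w 1 0 - v 1 0 * w 0 0.
Definition is_eig (M : 'M[CC]_2) (v : 'cV[CC]_2) := exists l, M *m v = l *: v.

Lemma mk2_surj (M : 'M[CC]_2) : exists a b c d, M = mk2 a b c d.
Proof. by exists (M 0 0), (M 0 1), (M 1 0), (M 1 1); exact: mk2E. Qed.

Lemma mkv_surj (v : 'cV[CC]_2) : exists p q, v = mkv p q.
Proof. by exists (v 0 0), (v 1 0); exact: mkvE. Qed.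

Lemma mkv0 p q i : mkv p q i 0 = if i == 0 then p else q.
Proof. by rewrite mxE. Qed.

Lemma cross2 p q p' q' : cross (mkv p q) (mkv p' q') = p * q' - q * p'.
Proof. by rewrite /cross !mxE. Qed.

Lemma lin_comb (L R h1 h2 S1 S2 : CC) : h1 = 0 -> h2 = 0 ->
  L - R = h1 * S1 + h2 * S2 -> L = R.
Proof. move=> -> -> /eqP; by rewrite !mul0r addr0 subr_eq0 => /eqP. Qed.

Lemma Kc2 a b c d a' b' c' d' : Kc (mk2 a b c d) (mk2 a' b' c' d') =
  (b * c' - b' * c) * (b * c' - b' * c) * (-1)
  - (a * b' + b * d' - a' * b - b' * d) * (c * a' + d * c' - c' * a - d' * c).
Proof. rewrite /Kc !mul2 opp2 add2 det2; ring. Qed.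

Lemma mkv_congr p q p' q' : p = p' -> q = q' -> mkv p q = mkv p' q'.
Proof. by move=> -> ->. Qed.

Lemma eig_of_cross (M : 'M[CC]_2) v : v != 0 -> cross (M *m v) v = 0 -> is_eig M v.
Proof.
have [p [q ->]] := mkv_surj v; have [a [b [c [d ->]]]] := mk2_surj M.
rewrite mkv_eq0 mul2v cross2 => Hv E.
case: (eqVneq p 0) => Hp.
  have Hq : q != 0 by move: Hv; rewrite Hp eqxx.
  exists ((c * p + d * q) / q); rewrite mul2v scale2v; apply: mkv_congr; last by rewrite mulfVK.
  have H2 : (a * p + b * q) * q = 0 by rewrite -E Hp; ring.
  move/eqP: H2; rewrite mulf_eq0 (negbTE Hq) orbF => /eqP ->; by rewrite Hp mulr0.
exists ((a * p + b * q) / p); rewrite mul2v scale2v; apply: mkv_congr; first by rewrite mulfVK.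
apply: (mulIf Hp); rewrite mulrAC mulfVK //.
by apply/eqP; rewrite eq_sym -subr_eq0 E.
Qed.

Lemma cross_of_eig (M : 'M[CC]_2) v : is_eig M v -> cross (M *m v) v = 0.
Proof.
case=> l ->; have [p [q ->]] := mkv_surj v.
by rewrite scale2v cross2; ring.
Qed.

Lemma sigmaK (X Y : 'M[CC]_2) : \det X = 1 -> \det Y = 1 -> sigma12 X Y = - Kc X Y.
Proof.
have [a [b [c [d ->]]]] := mk2_surj X; have [a' [b' [c' [d' ->]]]] := mk2_surj Y.
rewrite !det2 => HX HY; rewrite /sigma12 !inv2 // !mul2 tr2 Kc2.
apply: (lin_comb (h1 := a * d - b * c - 1) (h2 := a' * d' - b' * c' - 1)
   (S1 := 2 * (a' * d' - b' * c')) (S2 := 2));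
  [by rewrite HX subrr | by rewrite HY subrr | ring].
Qed.

Lemma nu1_neq0 (X : 'M[CC]_2) : (\tr X) ^+ 2 != 4 -> nu1 X != 0.
Proof.
apply: contra => /eqP H; apply/eqP.
have E : (\tr X) ^+ 2 = nu1 X * 2 + 4 by rewrite /nu1; field.
by rewrite E H mul0r add0r.
Qed.

Lemma Kc_sym X Y : Kc X Y = Kc Y X.
Proof.
have [a [b [c [d ->]]]] := mk2_surj X; have [a' [b' [c' [d' ->]]]] := mk2_surj Y.
rewrite !Kc2; ring.
Qed.

Lemma Kc_mulr X Y : \det Y = 1 -> Kc (X *m Y) Y = Kc X Y.
Proof.
move=> HY; rewrite /Kc.
have -> : X *m Y *m Y - Y *m (X *m Y) = (X *m Y - Y *m X) *m Y by rewrite mulmxBl !mulmxA.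
by rewrite det_mulmx HY mulr1.
Qed.

Lemma unit_det1 (Y : 'M[CC]_2) : \det Y = 1 -> Y \in unitmx.
Proof. by move=> H; rewrite unitmxE H unitr1. Qed.

Lemma Kc_mulV X Y : \det Y = 1 -> Kc (X *m invmx Y) Y = Kc X Y.
Proof.
move=> HY; have U := unit_det1 HY.
rewrite /Kc (mulmxKV U).
have -> : X - Y *m (X *m invmx Y) = (X *m Y - Y *m X) *m invmx Y.
  by rewrite mulmxBl (mulmxK U) mulmxA.
by rewrite det_mulmx det_inv HY invr1 mulr1.
Qed.

Lemma tr_mulV (X Y : 'M[CC]_2) : \det Y = 1 -> \tr (X *m invmx Y) = \tr X * \tr Y - \tr (X *m Y).
Proof.
have [a [b [c [d ->]]]] := mk2_surj X; have [a' [b' [c' [d' ->]]]] := mk2_surj Y.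
rewrite det2 => HY; rewrite inv2 // !mul2 !tr2; ring.
Qed.

Lemma Kc_tr X Y : \det X = 1 -> \det Y = 1 ->
  Kc X Y = 4 + \tr X * \tr Y * \tr (X *m Y) - (\tr X) ^+ 2 - (\tr Y) ^+ 2 - (\tr (X *m Y)) ^+ 2.
Proof.
have [a [b [c [d ->]]]] := mk2_surj X; have [a' [b' [c' [d' ->]]]] := mk2_surj Y.
rewrite !det2 => HX HY; rewrite !mul2 !tr2 Kc2.
apply: (lin_comb (h1 := a * d - b * c - 1) (h2 := a' * d' - b' * c' - 1)
   (S1 := 4 * (a' * d' - b' * c') - (a' + d') ^+ 2) (S2 := 4 - (a + d) ^+ 2));
  [by rewrite HX subrr | by rewrite HY subrr | ring].
Qed.

Lemma arith4 (x y z : CC) : x ^+ 2 = 4 -> y ^+ 2 = 4 -> z ^+ 2 = 4 -> (x * y - z) ^+ 2 = 4 ->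
  4 + x * y * z - x ^+ 2 - y ^+ 2 - z ^+ 2 = 0.
Proof.
move=> Hx Hy Hz Hw.
apply: (mulIf two_neq0); rewrite mul0r.
apply: (lin_comb (h1 := x ^+ 2 - 4) (h2 := (x ^+ 2 - 4) * (y ^+ 2 - 2) + 2 * (y ^+ 2 - 4) - (z ^+ 2 - 4) - ((x * y - z) ^+ 2 - 4))
   (S1 := 0) (S2 := 1));
  [by rewrite Hx subrr | by rewrite Hx Hy Hz Hw !subrr; ring | ring].
Qed.


Lemma cross_cols (X Y : 'M[CC]_2) :
  [/\ cross (X *m ((X *m Y - Y *m X) *m mkv 1 0)) ((X *m Y - Y *m X) *m mkv 1 0) = X 1 0 * Kc X Y,
      cross (X *m ((X *m Y - Y *m X) *m mkv 0 1)) ((X *m Y - Y *m X) *m mkv 0 1) = - X 0 1 * Kc X Y,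
      cross (Y *m ((X *m Y - Y *m X) *m mkv 1 0)) ((X *m Y - Y *m X) *m mkv 1 0) = Y 1 0 * Kc X Y &
      cross (Y *m ((X *m Y - Y *m X) *m mkv 0 1)) ((X *m Y - Y *m X) *m mkv 0 1) = - Y 0 1 * Kc X Y].
Proof.
have [a [b [c [d ->]]]] := mk2_surj X; have [a' [b' [c' [d' ->]]]] := mk2_surj Y.
rewrite Kc2 !mul2 opp2 add2 !mul2v !cross2 !mxE /=.
split; ring.
Qed.

Lemma mulv10 (M : 'M[CC]_2) : M *m mkv 1 0 = mkv (M 0 0) (M 1 0).
Proof. rewrite {1}(mk2E M) mul2v; apply: mkv_congr; ring. Qed.

Lemma mulv01 (M : 'M[CC]_2) : M *m mkv 0 1 = mkv (M 0 1) (M 1 1).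
Proof. rewrite {1}(mk2E M) mul2v; apply: mkv_congr; ring. Qed.

Lemma pair_eig (X Y : 'M[CC]_2) : Kc X Y = 0 -> X *m Y != Y *m X ->
  exists v, v != 0 /\ is_eig X v /\ is_eig Y v.
Proof.
move=> K Hc; have [h1 h2 h3 h4] := cross_cols X Y.
rewrite K !mulr0 in h1 h2 h3 h4.
set C := X *m Y - Y *m X in h1 h2 h3 h4.
have HC : C != 0 by rewrite subr_eq0.
case: (eqVneq (C *m mkv 1 0) 0) => H0.
  have H1 : C *m mkv 0 1 != 0.
    apply: contra HC => /eqP H1; apply/eqP.
    move: H0 H1; rewrite mulv10 mulv01 => /eqP; rewrite mkv_eq0 => /andP[/eqP e1 /eqP e2].
    move/eqP; rewrite mkv_eq0 => /andP[/eqP e3 /eqP e4].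
    rewrite (mk2E C) e1 e2 e3 e4; apply/matrixP => i j; rewrite !mxE.
    by case: ifP; case: ifP.
  exists (C *m mkv 0 1); split => //; split; [exact: (eig_of_cross H1 h2) | exact: (eig_of_cross H1 h4)].
exists (C *m mkv 1 0); split => //; split; [exact: (eig_of_cross H0 h1) | exact: (eig_of_cross H0 h3)].
Qed.

Definition Fq (a b c d dl mu : CC) := b * dl ^+ 2 + (d - a) * dl * mu - c * mu ^+ 2.

Lemma Kc_tri a b c d a1 b1 d1 :
  Kc (mk2 a b c d) (mk2 a1 b1 0 d1) = c * Fq a b c d (a1 - d1) b1.
Proof. rewrite Kc2 /Fq; ring. Qed.

Lemma key_c (a b c d a1 b1 d1 a2 b2 d2 : CC) : a1 * d1 = 1 -> a2 * d2 = 1 ->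
  b2 * (a1 - d1) - b1 * (a2 - d2) != 0 ->
  Kc (mk2 a b c d) (mk2 a1 b1 0 d1) = 0 -> Kc (mk2 a b c d) (mk2 a2 b2 0 d2) = 0 ->
  Kc (mk2 a b c d) (mk2 a1 b1 0 d1 *m mk2 a2 b2 0 d2) = 0 -> c = 0.
Proof.
move=> H1 H2 HX K1 K2 K12.
rewrite mul2 !mul0r !mulr0 !add0r !addr0 Kc_tri in K12.
rewrite Kc_tri in K1; rewrite Kc_tri in K2.
set X := b2 * (a1 - d1) - b1 * (a2 - d2) in HX.
set Bil := 2 * b * (a1 - d1) * (a2 - d2) + (d - a) * ((a1 - d1) * b2 + b1 * (a2 - d2))
  - 2 * c * b1 * b2.
have Ha1 : a1 != 0 by apply/eqP => E; move: H1; rewrite E mul0r => /eqP; rewrite eq_sym oner_eq0.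
have Hd2 : d2 != 0 by apply/eqP => E; move: H2; rewrite E mulr0 => /eqP; rewrite eq_sym oner_eq0.
have E1 : X ^+ 2 * (a1 * d2) * (c * Bil) =
  X ^+ 2 * (c * Fq a b c d (a1 * a2 - d1 * d2) (a1 * b2 + b1 * d2))
  - (d2 * X) ^+ 2 * (c * Fq a b c d (a1 - d1) b1)
  - (a1 * X) ^+ 2 * (c * Fq a b c d (a2 - d2) b2).
  rewrite /X /Bil /Fq; ring.
rewrite K1 K2 K12 !mulr0 !subr0 in E1.
have HB : c * Bil = 0.
  move/eqP: E1; rewrite !mulf_eq0 (negbTE HX) (negbTE Ha1) (negbTE Hd2) /=.
  by case/orP => /eqP ->; rewrite ?mul0r ?mulr0.
have E2 : X ^+ 2 * (- c ^+ 2) = (a2 - d2) ^+ 2 * (c * Fq a b c d (a1 - d1) b1)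
  + (a1 - d1) ^+ 2 * (c * Fq a b c d (a2 - d2) b2) - (a1 - d1) * (a2 - d2) * (c * Bil).
  rewrite /X /Bil /Fq; ring.
rewrite K1 K2 HB !mulr0 addr0 subr0 in E2.
move/eqP: E2; rewrite !mulf_eq0 (negbTE HX) /= oppr_eq0 mulf_eq0 orbb.
by move/eqP.
Qed.

Lemma mk2_congr a b c d a' b' c' d' : a = a' -> b = b' -> c = c' -> d = d' ->
  mk2 a b c d = mk2 a' b' c' d'.
Proof. by move=> -> -> -> ->. Qed.

Definition cj (P X : 'M[CC]_2) := invmx P *m X *m P.

Lemma cj_mul P X Y : P \in unitmx -> cj P (X *m Y) = cj P X *m cj P Y.
Proof. move=> U; by rewrite /cj !mulmxA mulmxK. Qed.

Lemma cj_det P X : P \in unitmx -> \det (cj P X) = \det X.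
Proof.
move=> U; rewrite /cj !det_mulmx det_inv mulrAC mulVf ?mul1r //.
Qed.

Lemma cj_inj P X Y : P \in unitmx -> cj P X = cj P Y -> X = Y.
Proof.
move=> U E; have E1 := congr1 (fun M => P *m (M *m invmx P)) E.
by rewrite /cj /= !(mulmxK U) !(mulKVmx U) in E1.
Qed.

Lemma cj_Kc P X Y : P \in unitmx -> Kc (cj P X) (cj P Y) = Kc X Y.
Proof.
move=> U; rewrite /Kc.
rewrite -(cj_mul X Y U) -(cj_mul Y X U).
have -> : cj P (X *m Y) - cj P (Y *m X) = cj P (X *m Y - Y *m X).
 by rewrite /cj mulmxBr mulmxBl.
exact: (cj_det (X *m Y - Y *m X) U).
Qed.


Lemma cj_eig P X v : P \in unitmx -> P *m mkv 1 0 = v ->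
  (is_eig X v <-> cj P X 1 0 = 0).
Proof.
move=> U HP; split.
  case=> l Hl.
  have : cj P X *m mkv 1 0 = mkv l 0.
    rewrite /cj -mulmxA HP -mulmxA Hl -scalemxAr -HP mulKmx // scale2v.
    apply: mkv_congr; ring.
  by rewrite mulv10 => /eqv [].
move=> H; exists (cj P X 0 0).
have E : X *m P = P *m cj P X by rewrite /cj !mulmxA mulmxV // mul1mx.
rewrite -HP mulmxA E -mulmxA mulv10 H scalemxAr scale2v; congr (_ *m _).
apply: mkv_congr; ring.
Qed.

Lemma conj_arg (Ai Aj Ak : 'M[CC]_2) (v : 'cV[CC]_2) :
  \det Ai = 1 -> \det Aj = 1 -> v != 0 -> is_eig Ai v -> is_eig Aj v ->
  Ai *m Aj != Aj *m Ai -> Kc Ak Ai = 0 -> Kc Ak Aj = 0 -> Kc Ak (Ai *m Aj) = 0 ->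
  is_eig Ak v.
Proof.
move=> Di Dj Hv Ei Ej Hc K1 K2 K12.
have [p [q Ev]] := mkv_surj v.
have [P [U HP]] : exists P, P \in unitmx /\ P *m mkv 1 0 = v.
  rewrite Ev; case: (eqVneq q 0) => Hq.
    exists (mk2 p 0 q 1); split.
      rewrite unitmxE det2 Hq !mulr0 mulr1 subr0 unitfE.
      by move: Hv; rewrite Ev mkv_eq0 Hq eqxx andbT.
    rewrite mul2v; apply: mkv_congr; ring.
  exists (mk2 p 1 q 0); split.
    by rewrite unitmxE det2 mulr0 mul1r sub0r unitfE oppr_eq0.
  rewrite mul2v; apply: mkv_congr; ring.
have [a1 [b1 [c1 [d1 E1]]]] := mk2_surj (cj P Ai).
have [a2 [b2 [c2 [d2 E2]]]] := mk2_surj (cj P Aj).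
have [a [b [c [d E3]]]] := mk2_surj (cj P Ak).
have Hc1 : c1 = 0 by have := (cj_eig Ai U HP).1 Ei; rewrite E1 mxE.
have Hc2 : c2 = 0 by have := (cj_eig Aj U HP).1 Ej; rewrite E2 mxE.
subst c1 c2.
have D1 : a1 * d1 = 1 by rewrite -Di -(cj_det _ U) E1 det2 mulr0 subr0.
have D2 : a2 * d2 = 1 by rewrite -Dj -(cj_det _ U) E2 det2 mulr0 subr0.
have HX : b2 * (a1 - d1) - b1 * (a2 - d2) != 0.
  apply: contra Hc => /eqP HX; apply/eqP; apply: (cj_inj U).
  rewrite (cj_mul Ai Aj U) (cj_mul Aj Ai U) E1 E2 !mul2; apply: mk2_congr; [ring | | ring | ring].
apply: (lin_comb (h1 := b2 * (a1 - d1) - b1 * (a2 - d2)) (h2 := 0) (S1 := 1) (S2 := 0)) => //.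
  ring.
apply/(cj_eig Ak U HP); rewrite E3 mxE /=.
apply: (key_c (a := a) (b := b) (d := d) D1 D2 HX).
- by rewrite -E1 -E3 cj_Kc.
- by rewrite -E2 -E3 cj_Kc.
- by rewrite -E1 -E2 -E3 -(cj_mul Ai Aj U) cj_Kc.
Qed.

Lemma lin_comb4 (L R h1 h2 h3 h4 S1 S2 S3 S4 : CC) : h1 = 0 -> h2 = 0 -> h3 = 0 -> h4 = 0 ->
  L - R = h1 * S1 + h2 * S2 + h3 * S3 + h4 * S4 -> L = R.
Proof. move=> -> -> -> -> /eqP; by rewrite !mul0r !addr0 subr_eq0 => /eqP. Qed.

Lemma exists_eig (M : 'M[CC]_2) : exists v, v != 0 /\ is_eig M v.
Proof.
have [a [b [c [d ->]]]] := mk2_surj M.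
case: (eqVneq c 0) => Hc.
  exists (mkv 1 0); split; first by rewrite mkv_eq0 oner_eq0.
  apply: eig_of_cross; first by rewrite mkv_eq0 oner_eq0.
  by rewrite mul2v cross2 Hc; ring.
set al := - c; set be := a - d; set De := be ^+ 2 - 4 * al * b.
set s := sqrtC De.
have Hs : s ^+ 2 = De by exact: sqrtCK.
have Hal : al != 0 by rewrite oppr_eq0.
set p := (s - be) / (2 * al).
have Hp : 2 * al * p + be = s by rewrite /p; field; exact: Hal.
exists (mkv p 1); split; first by rewrite mkv_eq0 oner_eq0 andbF.
apply: eig_of_cross; first by rewrite mkv_eq0 oner_eq0 andbF.
rewrite mul2v cross2.
have H4 : 4 * al != 0 by rewrite mulf_neq0 // pnatr_eq0.
apply: (mulfI H4); rewrite mulr0.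
have -> : 4 * al * ((a * p + b * 1) * 1 - (c * p + d * 1) * p) = (2 * al * p + be) ^+ 2 - De.
  by rewrite /De /al /be; ring.
by rewrite Hp Hs subrr.
Qed.

Definition nonscalar (X : 'M[CC]_2) := (X 0 1 != 0) || (X 0 0 - X 1 1 != 0) || (X 1 0 != 0).

Lemma comm_eig (X Y : 'M[CC]_2) v : X *m Y = Y *m X -> nonscalar X -> v != 0 ->
  is_eig X v -> is_eig Y v.
Proof.
have [a [b [c [d ->]]]] := mk2_surj X; have [a' [b' [c' [d' ->]]]] := mk2_surj Y.
move=> HXY Hns Hv HX; apply: eig_of_cross => //.
move/cross_of_eig: HX.
have [p [q Ev]] := mkv_surj v; rewrite Ev !mul2v !cross2 => EX.
rewrite !mul2 in HXY; case/eq2: HXY => e00 e01 e10 _.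
have z00 : a * a' + b * c' - (a' * a + b' * c) = 0 by rewrite e00 subrr.
have z01 : a * b' + b * d' - (a' * b + b' * d) = 0 by rewrite e01 subrr.
have z10 : c * a' + d * c' - (c' * a + d' * c) = 0 by rewrite e10 subrr.
move: Hns; rewrite /nonscalar !mxE /= => /orP [/orP [Hb | Had] | Hc].
- apply: (mulfI Hb); rewrite mulr0.
  apply: (lin_comb4 EX z00 z01 z10 (S1 := b') (S2 := - p ^+ 2) (S3 := - (p * q)) (S4 := 0)).
  ring.
- apply: (mulfI Had); rewrite mulr0.
  apply: (lin_comb4 EX z00 z01 z10 (S1 := a' - d') (S2 := 0) (S3 := q ^+ 2) (S4 := p ^+ 2)).
  ring.
- apply: (mulfI Hc); rewrite mulr0.
  apply: (lin_comb4 EX z00 z01 z10 (S1 := c') (S2 := - q ^+ 2) (S3 := 0) (S4 := p * q)).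
  ring.
Qed.

Lemma common_eig n (A : 'I_n -> 'M[CC]_2) : (forall m, \det (A m) = 1) ->
  (forall i j, i != j -> Kc (A i) (A j) = 0) ->
  (forall i j k, i != j -> k != i -> k != j -> Kc (A k) (A i *m A j) = 0) ->
  exists v, v != 0 /\ forall m, is_eig (A m) v.
Proof.
move=> D K2 K3.
case: (boolP [exists i, exists j, A i *m A j != A j *m A i]).
  case/existsP => i /existsP [j Hij].
  have Hne : i != j by apply: contra Hij => /eqP ->.
  have [v [Hv [Ei Ej]]] := pair_eig (K2 _ _ Hne) Hij.
  exists v; split => // k.
  case: (eqVneq k i) => [->|Hki] //; case: (eqVneq k j) => [->|Hkj] //.
  apply: (conj_arg (D i) (D j) Hv Ei Ej Hij); [exact: K2 | exact: K2 | exact: K3].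
rewrite negb_exists => /forallP Hall.
have Hc i j : A i *m A j = A j *m A i.
  by move: (Hall i); rewrite negb_exists => /forallP /(_ j); rewrite negbK => /eqP.
case: (boolP [exists k, nonscalar (A k)]).
  case/existsP => k Hk; have [v [Hv Ev]] := exists_eig (A k).
  exists v; split => // m; exact: (comm_eig (Hc k m) Hk Hv Ev).
rewrite negb_exists => /forallP Hs.
exists (mkv 1 0); split; first by rewrite mkv_eq0 oner_eq0.
move=> m; apply: eig_of_cross; first by rewrite mkv_eq0 oner_eq0.
move: (Hs m); rewrite /nonscalar !negb_or !negbK => /andP [_ /eqP H10].
by rewrite mulv10 cross2 H10; ring.
Qed.

Lemma stage2 (G H : 'M[CC]_2) : \det G = 1 -> \det H = 1 -> Kc G H != 0 ->
  [\/ (\tr G) ^+ 2 != 4, (\tr H) ^+ 2 != 4, (\tr (G *m H)) ^+ 2 != 4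
    | (\tr (G *m invmx H)) ^+ 2 != 4].
Proof.
move=> DG DH K.
case: (eqVneq ((\tr G) ^+ 2) 4) => [h1|]; last by constructor 1.
case: (eqVneq ((\tr H) ^+ 2) 4) => [h2|]; last by constructor 2.
case: (eqVneq ((\tr (G *m H)) ^+ 2) 4) => [h3|]; last by constructor 3.
case: (eqVneq ((\tr (G *m invmx H)) ^+ 2) 4) => [h4|]; last by constructor 4.
rewrite tr_mulV // in h4.
by move: K; rewrite Kc_tr // arith4 // eqxx.
Qed.

Lemma single_red n (a : letter n) : reduced [:: a].
Proof. by []. Qed.

Lemma rho_nil n (rho : seq (letter n) -> 'M[CC]_2) : SL2_rep rho -> rho [::] = 1%:M.
Proof.
move=> [Hd Hm]; have U := unit_det1 (Hd [::] isT).
have E : rho [::] = rho [::] *m rho [::] by rewrite -Hm.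
by rewrite -[LHS](mulKmx U) -E mulVmx.
Qed.

Lemma rho_winv n (rho : seq (letter n) -> 'M[CC]_2) u : SL2_rep rho -> reduced u ->
  rho (winv u) = invmx (rho u).
Proof.
move=> R Hu; have [Hd Hm] := R; have U := unit_det1 (Hd u Hu).
have E : rho u *m rho (winv u) = 1%:M by rewrite -Hm ?winv_red // wmulV // rho_nil.
by rewrite -[LHS](mulKmx U) E mulmx1.
Qed.

Lemma rho_img n (rho : seq (letter n) -> 'M[CC]_2) (E : 'I_n -> seq (letter n)) i b :
  SL2_rep rho -> basis_ok E ->
  rho (letter_img E (i, b)) = if b then invmx (rho (E i)) else rho (E i).
Proof. move=> R HE; case: b => //=; rewrite /letter_img /= rho_winv //. Qed.

Lemma rho_subst1 n (rho : seq (letter n) -> 'M[CC]_2) (E : 'I_n -> seq (letter n)) i :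
  basis_ok E -> rho (subst_hom E [:: (i, false)]) = rho (E i).
Proof. by move=> HE; rewrite subst1. Qed.

Lemma rho_subst2 n (rho : seq (letter n) -> 'M[CC]_2) (E : 'I_n -> seq (letter n)) i j b :
  SL2_rep rho -> basis_ok E ->
  rho (subst_hom E [:: (i, false); (j, b)]) =
  rho (E i) *m (if b then invmx (rho (E j)) else rho (E j)).
Proof.
move=> R HE; have [Hd Hm] := R.
rewrite subst_cons subst_cons /= wmul1r; last exact: img_red.
rewrite Hm; try exact: img_red.
by rewrite rho_img // rho_img.
Qed.

Lemma eig_inv (M : 'M[CC]_2) v : M \in unitmx -> v != 0 -> is_eig M v -> is_eig (invmx M) v.
Proof.
move=> U Hv [l Hl].
have Hl0 : l != 0.
  apply: contra Hv => /eqP l0; apply/eqP.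
  by rewrite -(mulKmx U v) Hl l0 scale0r mulmx0.
exists l^-1.
have E : invmx M *m (l *: v) = v by rewrite -Hl mulKmx.
by rewrite -{2}E -scalemxAr scalerA mulVf // scale1r.
Qed.

Lemma irr_noeig n (rho : seq (letter n) -> 'M[CC]_2) (v : 'cV[CC]_2) :
  SL2_rep rho -> irreducible_rep rho -> v != 0 ->
  ~ (forall m, is_eig (rho [:: (m, false)]) v).
Proof.
move=> R Irr Hv Hall; apply: Irr; have [Hd Hm] := R.
have Hg : forall g, reduced g -> is_eig (rho g) v.
  elim=> [|a g IH] Hg.
    by exists 1; rewrite rho_nil // mul1mx scale1r.
  have Hg' := reduced_tl Hg.
  have -> : rho (a :: g) = rho [:: a] *m rho g.
    by rewrite -Hm // wmul_cat.
  have [mu Hmu] := IH Hg'.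
  have [l Hl] : is_eig (rho [:: a]) v.
    case: a {Hg} => i [].
      have -> : [:: (i, true)] = winv [:: (i, false)] by [].
      rewrite rho_winv //; apply: eig_inv;
        [exact: (unit_det1 (Hd [:: (i, false)] isT)) | exact: Hv | exact: Hall].
    exact: Hall.
  by exists (mu * l); rewrite -mulmxA Hmu -scalemxAr Hl scalerA.
exists <<v^T>>%MS; split.
- by rewrite mxrank_gen rank_rV trmx_eq0 Hv.
- by rewrite mxrank_gen rank_rV leq_b1.
- move=> g Hgr; have [l Hl] := Hg g Hgr.
  rewrite (eqmxMr _ (genmxE _)) genmxE -trmx_mul Hl.
  have -> : (l *: v)^T = l *: v^T by apply/matrixP => i j; rewrite !mxE.
  exact: scalemx_sub.
Qed.

Lemma perm2 n (o0 o1 i j : 'I_n) : o0 != o1 -> i != j ->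
  exists s : {perm 'I_n}, s o0 = i /\ s o1 = j.
Proof.
move=> Ho Hij.
set ta := tperm o0 i; set j' := ta j; set tb := tperm o1 j'.
have Hj' : j' != o0.
  apply: contra Hij => /eqP E; apply/eqP.
  by move: (congr1 ta E); rewrite /j' /ta tpermK (tpermL o0 i) => ->.
exists (tb * ta)%g; rewrite !permM; split.
  have Ho' : o1 != o0 by rewrite eq_sym.
  by rewrite /tb (tpermD Ho' Hj') /ta tpermL.
by rewrite /tb tpermL /j' /ta tpermK.
Qed.

Lemma nbasis_id n : nbasis (fun i : 'I_n => [:: (i, false)]).
Proof.
split => //; exists (fun i : 'I_n => [:: (i, false)]); split => //.
Qed.

Lemma stage2_final n (rho : seq (letter n) -> 'M[CC]_2) (o0 o1 : 'I_n) E1 :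
  SL2_rep rho -> o0 != o1 -> nbasis E1 -> Kc (rho (E1 o0)) (rho (E1 o1)) != 0 ->
  exists e, free_basis e /\ sigma12 (rho (e o0)) (rho (e o1)) != 0 /\ nu1 (rho (e o0)) != 0.
Proof.
move=> R Ho NB K; have [Hd Hm] := R; have HE1 := NB.1.
have DG : \det (rho (E1 o0)) = 1 by apply: Hd; exact: HE1.
have DH : \det (rho (E1 o1)) = 1 by apply: Hd; exact: HE1.
set G := rho (E1 o0) in K DG *; set H := rho (E1 o1) in K DH *.
suff [E2 [NB2 [S N]]] : exists E2, nbasis E2 /\
    sigma12 (rho (subst_hom E1 (E2 o0))) (rho (subst_hom E1 (E2 o1))) != 0 /\
    nu1 (rho (subst_hom E1 (E2 o0))) != 0.
  exists (fun i => subst_hom E1 (E2 i)); split => //.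
  exact/nbasis_free/nbasis_comp.
have Ho' : o1 != o0 by rewrite eq_sym.
case: (stage2 DG DH K) => T.
- exists (fun i : 'I_n => [:: (i, false)]); split; first exact: nbasis_id.
  rewrite !rho_subst1 // -/G -/H sigmaK // oppr_eq0; split => //.
  exact: nu1_neq0.
- exists (fun i => [:: (tperm o0 o1 i, false)]); split; first exact: nbasis_perm.
  rewrite !rho_subst1 // tpermL tpermR -/G -/H sigmaK // oppr_eq0 Kc_sym; split => //.
  exact: nu1_neq0.
- exists (transv o0 o1 false); split; first exact: nbasis_transv.
  rewrite transv_m (transv_neq _ _ Ho') rho_subst2 // rho_subst1 // -/G -/H.
  have DGH : \det (G *m H) = 1 by rewrite det_mulmx DG DH mulr1.
  rewrite sigmaK // oppr_eq0 Kc_mulr //; split => //.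
  exact: nu1_neq0.
- exists (transv o0 o1 true); split; first exact: nbasis_transv.
  rewrite transv_m (transv_neq _ _ Ho') rho_subst2 // rho_subst1 // -/G -/H.
  have DGH : \det (G *m invmx H) = 1 by rewrite det_mulmx det_inv DG DH invr1 mulr1.
  rewrite sigmaK // oppr_eq0 Kc_mulV //; split => //.
  exact: nu1_neq0.
Qed.

Unset Implicit Arguments.

Theorem proposition4p3 (n : nat) (hn : (1 < n)%N)
    (rho : seq (letter n) -> 'M[CC]_2) :
  SL2_rep rho -> irreducible_rep rho ->
  exists e : 'I_n -> seq (letter n),
    free_basis e /\
    sigma12 (rho (e (Ordinal (ltnW hn)))) (rho (e (Ordinal hn))) != 0 /\
    nu1 (rho (e (Ordinal (ltnW hn)))) != 0.
Proof.
move=> R Irr.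
set o0 := Ordinal (ltnW hn); set o1 := Ordinal hn.
have Ho : o0 != o1 by [].
have [Hd Hm] := R.
set A := fun m : 'I_n => rho [:: (m, false)].
have D m : \det (A m) = 1 by exact: Hd.
suff [E1 [NB K]] : exists E1, nbasis E1 /\ Kc (rho (E1 o0)) (rho (E1 o1)) != 0.
  exact: (stage2_final R Ho NB K).
case: (boolP [exists i, exists j, (i != j) && (Kc (A i) (A j) != 0)]).
  case/existsP => i /existsP [j /andP [Hij K]].
  have [s [s0 s1]] := perm2 Ho Hij.
  exists (fun m => [:: (s m, false)]); split; first exact: (nbasis_perm s).
  by rewrite s0 s1.
rewrite negb_exists => /forallP N2.
have K2 i j : i != j -> Kc (A i) (A j) = 0.
  move=> Hij; move: (N2 i); rewrite negb_exists => /forallP /(_ j).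
  by rewrite Hij /= negbK => /eqP.
case: (boolP [exists i, exists j, exists k,
    [&& i != j, k != i, k != j & Kc (A k) (A i *m A j) != 0]]).
  case/existsP => i /existsP [j /existsP [k /and4P [Hij Hki Hkj K]]].
  have [s [s0 s1]] := perm2 Ho Hki.
  set l := (s^-1)%g j.
  have Hl : o1 != l.
    apply: contra Hij => /eqP E; apply/eqP.
    by rewrite -s1 E /l permKV.
  set P := fun m => [:: (s m, false)].
  have NP : nbasis P by exact: (nbasis_perm s).
  exists (fun m => subst_hom P (transv o1 l false m)); split.
    exact: nbasis_comp NP (nbasis_transv _ Hl).
  have HP := NP.1.
  rewrite (transv_neq l false Ho) (transv_m o1 l false) (rho_subst1 rho o0 HP).
  rewrite (rho_subst2 o1 l false R HP) /=.
  by rewrite /P s0 s1 /l permKV.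
rewrite negb_exists => /forallP N3.
have K3 i j k : i != j -> k != i -> k != j -> Kc (A k) (A i *m A j) = 0.
  move=> Hij Hki Hkj; move: (N3 i); rewrite negb_exists => /forallP /(_ j).
  rewrite negb_exists => /forallP /(_ k).
  by rewrite Hij Hki Hkj /= negbK => /eqP.
have [v [Hv Ev]] := common_eig D K2 K3.
by case: (irr_noeig R Irr Hv).
Qed.
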